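(* Let $\gamma$ be the geodesic with $\gamma(0)=1$ and $\dot\gamma(0)=z_0+x_0\in\mathfrak z\oplus\mathfrak v$, let $J=J_{z_0}$ and $x'(t)=e^{tJ}x_0$. A (smooth) vector field along $\gamma$ of the form $Y(t)=z(t)+e^{tJ}v(t)$, with $z(t)\in\mathfrak z$ and $v(t)\in\mathfrak v$ for each $t$, is a Jacobi field if and only if there is a constant $\zeta\in\mathfrak z$ such that for all $t$ $$\dot z(t)-[e^{tJ}v(t),x'(t)]=\zeta,\qquad e^{tJ}\ddot v(t)+e^{tJ}J\dot v(t)-J_\zeta x'(t)=0.$$
   Context: Let $N$ be a connected, simply connected, 2-step nilpotent real Lie group with Lie algebra $\mathfrak n$ and center $\mathfrak z$. Let $\langle\,,\rangle$ be an inner product on $\mathfrak n$, meaning a nondegenerate symmetric bilinear form (possibly indefinite); the same symbol denotes the induced left-invariant pseudo-Riemannian metric on $N$, with Levi-Civita connection $\nabla$. Assume the restriction of $\langle\,,\rangle$ to $\mathfrak z$ is nondegenerate and put $\mathfrak v=\mathfrak z^\perp$, so $\mathfrak n=\mathfrak z\oplus\mathfrak v$ orthogonally. For $z\in\mathfrak z$ define $J_z:\mathfrak v\to\mathfrak v$ by $\langle J_zx,y\rangle=\langle z,[x,y]\rangle$ for all $y\in\mathfrak v$; $J_z$ is skew-adjoint. All tangent spaces of $N$ are identified with $\mathfrak n=T_1N$ via left translation, so vector fields along a curve are $\mathfrak n$-valued functions; with this identification the geodesic $\gamma$ with $\gamma(0)=1$, $\dot\gamma(0)=z_0+x_0$ ($z_0\in\mathfrak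 z$, $x_0\in\mathfrak v$) satisfies $\dot\gamma(t)=z_0+e^{tJ_{z_0}}x_0$. A Jacobi field along $\gamma$ is a vector field $Y$ along $\gamma$ with $\nabla_{\dot\gamma}\nabla_{\dot\gamma}Y+R(Y,\dot\gamma)\dot\gamma=0$, where $R(X,Y)=\nabla_X\nabla_Y-\nabla_Y\nabla_X-\nabla_{[X,Y]}$ (equivalently, the variation fields of geodesic variations of $\gamma$). *)

(* Defs.v *)
From HB Require Import structures.
From mathcomp Require Import all_boot all_order all_algebra.
From mathcomp Require Import all_classical all_reals all_analysis.
Set Implicit Arguments. Unset Strict Implicit. Unset Printing Implicit Defensive.
Import Order.TTheory GRing.Theory Num.Theory.
Import numFieldNormedType.Exports.
Local Open Scope ring_scope.
Local Open Scope classical_set_scope.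

(* The Lie algebra n is modelled as 'rV[R]_n; linear maps act on the right
   (x |-> x *m A). *)

Section Defs.
Variables (R : realType) (n : nat).
Notation V := 'rV[R]_n.

Definition ip (G : 'M[R]_n) (x y : V) : R := (x *m G *m y^T) 0 0.

(* hypotheses on the bracket: bilinear (linear in 1st arg + skew),
   2-step nilpotent, not abelian *)
Definition two_step_nilpotent (br : V -> V -> V) : Prop :=
  [/\ (forall (a : R) (x y w : V), br (a *: x + y) w = a *: br x w + br y w),
      (forall x y : V, br x y = - br y x),
      (forall x y w : V, br (br x y) w = 0) &
      (exists x y : V, br x y != 0)].

Definition ncenter (br : V -> V -> V) (z : V) : Prop := forall x : V, br z x = 0.

Definition vpart (G : 'M[R]_n) (br : V -> V -> V) (x : V) : Prop :=
  forall z : V, ncenter br z -> ip G z x = 0.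

Definition inner_product (G : 'M[R]_n) : Prop := G^T = G /\ G \in unitmx.

Definition center_nondeg (G : 'M[R]_n) (br : V -> V -> V) : Prop :=
  forall z : V, ncenter br z -> (forall w : V, ncenter br w -> ip G z w = 0) -> z = 0.

(* Jm z is a matrix whose action on v is J_z : v -> v, i.e.
   J_z x in v and <J_z x, y> = <z,[x,y]> for all y in v (for z in the ncenter).
   Its action on the ncenter is irrelevant and left unconstrained. *)
Definition is_J (G : 'M[R]_n) (br : V -> V -> V) (Jm : V -> 'M[R]_n) : Prop :=
  forall z : V, ncenter br z -> forall x : V, vpart G br x ->
    vpart G br (x *m Jm z) /\
    (forall y : V, vpart G br y -> ip G (x *m Jm z) y = ip G z (br x y)).

(* Levi-Civita connection on left-invariant fields (Koszul formula):
   <nabla_X Y, Z> = 1/2 (<[X,Y],Z> - <[Y,Z],X> + <[Z,X],Y>) *)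
Definition koszul (G : 'M[R]_n) (br : V -> V -> V) (X Y Z : V) : R :=
  2^-1 * (ip G (br X Y) Z - ip G (br Y Z) X + ip G (br Z X) Y).

Definition nabla (G : 'M[R]_n) (br : V -> V -> V) (X Y : V) : V :=
  (\row_j koszul G br X Y (delta_mx 0 j)) *m invmx G.

Definition curv (G : 'M[R]_n) (br : V -> V -> V) (X Y Z : V) : V :=
  nabla G br X (nabla G br Y Z) - nabla G br Y (nabla G br X Z)
  - nabla G br (br X Y) Z.

(* covariant derivative along a curve with velocity c (in the
   left-invariant trivialisation): D Y = Y' + nabla_{c} Y *)
Definition covD (G : 'M[R]_n) (br : V -> V -> V) (c Y : R -> V) (t : R) : V :=
  derive1 Y t + nabla G br (c t) (Y t).

Definition is_jacobi (G : 'M[R]_n) (br : V -> V -> V) (c Y : R -> V) : Prop :=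
  forall t : R, covD G br c (covD G br c Y) t + curv G br (Y t) (c t) (c t) = 0.

Definition mexp (A : 'M[R]_n) : 'M[R]_n :=
  limn (series (fun k : nat => (k`!%:R)^-1 *: A ^+ k)).

Definition smooth (f : R -> V) : Prop :=
  forall (k : nat) (t : R), derivable (derive1n k f) t 1.

End Defs.

(* Main.v *)
Require Import Defs.
From HB Require Import structures.
From mathcomp Require Import all_boot all_order all_algebra.
From mathcomp Require Import all_classical all_reals all_analysis.
From mathcomp Require Import ring lra.
Import Order.TTheory GRing.Theory Num.Theory.
Import numFieldNormedType.Exports.
Local Open Scope ring_scope.

Module Helpers.
Set Implicit Arguments. Unset Strict Implicit. Unset Printing Implicit Defensive.
Local Open Scope classical_set_scope.
Local Open Scope ring_scope.

Section BL.
Variable R : realType.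

Lemma is_derive_coord m n (f : R -> 'M[R]_(m,n)) (t : R) df i j :
  is_derive t 1 f df -> is_derive t 1 (fun s => f s i j) (df i j).
Proof.
move=> [d1 d2]; have := d1; move/derivable_mxP => /(_ i j) dij.
apply: DeriveDef => //; rewrite -d2 derive_mx //= mxE //.
Qed.

Lemma is_deriveZl_cst m n (h : R -> R) (C : 'M[R]_(m,n)) (t : R) dh :
  is_derive t 1 h dh -> is_derive t 1 (fun s => h s *: C) (dh *: C).
Proof.
move=> hd.
have dij : forall i j, is_derive t 1 (fun s => (h s *: C) i j) ((dh *: C) i j).
  move=> i j; rewrite mxE.
  have -> : (fun s => (h s *: C) i j) = (fun s => h s * C i j).
    by apply/funext => s; rewrite mxE.
  have := @is_deriveM R R h (cst (C i j)) t 1 dh 0 hd (is_derive_cst _ _ _).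
  by move=> H; apply: is_derive_eq H _; rewrite /= scaler0 add0r mulrC.
have der : derivable (fun s => h s *: C) t 1.
  by apply/derivable_mxP => i j; case: (dij i j).
apply: DeriveDef => //; rewrite derive_mx //; apply/matrixP => i j.
by rewrite mxE; case: (dij i j).
Qed.


Section Bil.
Variables (m1 n1 m2 n2 m3 n3 : nat).
Variable b : 'M[R]_(m1,n1) -> 'M[R]_(m2,n2) -> 'M[R]_(m3,n3).
Hypothesis bl : forall a x x' y, b (a *: x + x') y = a *: b x y + b x' y.
Hypothesis br : forall a x y y', b x (a *: y + y') = a *: b x y + b x y'.

Lemma bl0 y : b 0 y = 0.
Proof. have := bl 1 0 0 y; rewrite !scale1r addr0; move/(congr1 (fun z => z - b 0 y)); rewrite subrr addrK => H; by rewrite -H. Qed.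
Lemma br0 x : b x 0 = 0.
Proof. have := br 1 x 0 0; rewrite !scale1r addr0; move/(congr1 (fun z => z - b x 0)); rewrite subrr addrK => H; by rewrite -H. Qed.
Lemma blD x x' y : b (x + x') y = b x y + b x' y.
Proof. by have := bl 1 x x' y; rewrite !scale1r. Qed.
Lemma brD x y y' : b x (y + y') = b x y + b x y'.
Proof. by have := br 1 x y y'; rewrite !scale1r. Qed.
Lemma blZ a x y : b (a *: x) y = a *: b x y.
Proof. by have := bl a x 0 y; rewrite !addr0 bl0 addr0. Qed.
Lemma brZ a x y : b x (a *: y) = a *: b x y.
Proof. by have := br a x y 0; rewrite !addr0 br0 addr0. Qed.
Lemma bl_sum I (s : seq I) (F : I -> _) y : b (\sum_(i <- s) F i) y = \sum_(i <- s) b (F i) y.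
Proof. by apply: (big_morph (fun x => b x y)) => [x x'|]; [exact: blD|exact: bl0]. Qed.
Lemma br_sum I (s : seq I) x (F : I -> _) : b x (\sum_(i <- s) F i) = \sum_(i <- s) b x (F i).
Proof. by apply: (big_morph (fun y => b x y)) => [y y'|]; [exact: brD|exact: br0]. Qed.

Lemma b_expand x y : b x y = \sum_(i < m1) \sum_(j < n1) \sum_(k < m2) \sum_(l < n2)
   (x i j * y k l) *: b (delta_mx i j) (delta_mx k l).
Proof.
rewrite {1}(matrix_sum_delta x) bl_sum; apply: eq_bigr => i _.
rewrite bl_sum; apply: eq_bigr => j _.
rewrite blZ {1}(matrix_sum_delta y) br_sum scaler_sumr; apply: eq_bigr => k _.
rewrite br_sum scaler_sumr; apply: eq_bigr => l _.
by rewrite brZ scalerA.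
Qed.

Lemma is_derive_sumf (t : R) m (h : 'I_m -> R -> 'M[R]_(m3,n3)) dh :
  (forall i, is_derive t 1 (h i) (dh i)) ->
  is_derive t 1 (fun s => \sum_(i < m) h i s) (\sum_(i < m) dh i).
Proof.
move=> H; have := @is_derive_sum R R _ m h t 1 dh H.
have -> // : (\sum_(i < m) h i) = (fun s => \sum_(i < m) h i s).
by rewrite fct_sumE.
Qed.

Lemma is_derive_bil (f : R -> 'M[R]_(m1,n1)) (g : R -> 'M[R]_(m2,n2)) (t : R) df dg :
  is_derive t 1 f df -> is_derive t 1 g dg ->
  is_derive t 1 (fun s => b (f s) (g s)) (b df (g t) + b (f t) dg).
Proof.
move=> hf hg.
have -> : (fun s => b (f s) (g s)) = (fun s => \sum_(i < m1) \sum_(j < n1) \sum_(k < m2) \sum_(l < n2)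
   (f s i j * g s k l) *: b (delta_mx i j) (delta_mx k l)).
  by apply/funext => s; rewrite b_expand.
rewrite (b_expand df) (b_expand (f t)) -big_split; apply: is_derive_sumf => i.
rewrite -big_split; apply: is_derive_sumf => j.
rewrite -big_split; apply: is_derive_sumf => k.
rewrite -big_split; apply: is_derive_sumf => l.
have H := @is_deriveM R R (fun s => f s i j) (fun s => g s k l) t 1 _ _
   (is_derive_coord i j hf) (is_derive_coord k l hg).
apply: is_derive_eq; first exact: (is_deriveZl_cst _ H).
rewrite /= -scalerDl; congr (_ *: _); rewrite /GRing.scale /= addrC [f t i j * _]mulrC [g t k l * _]mulrC //.
Qed.

End Bil.
End BL.

Section Lim.
Variable R : realType.

Lemma cvg_entry m n (u : nat -> 'M[R]_(m,n)) (L : 'M[R]_(m,n)) i j :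
  u @ \oo --> L -> (fun N => u N i j) @ \oo --> L i j.
Proof.
move=> H; apply: (@continuous_cvg _ _ _ _ _ u (fun M : 'M[R]_(m,n) => M i j)) => //.
exact: coord_continuous.
Qed.

Lemma cvg_entries m n (u : nat -> 'M[R]_(m,n)) (L : 'M[R]_(m,n)) :
  (forall i j, (fun N => u N i j) @ \oo --> L i j) -> u @ \oo --> L.
Proof.
move=> H; apply/cvgrPdist_le => /= e e0.
near=> N.
rewrite /Num.Def.normr/= mx_normrE (bigmax_le _ (ltW e0))//= => ij _.
rewrite !mxE/=.
move: ij; near: N; apply: filter_forall => /= ij.
exact: ((cvgrPdist_le _ _).1 (H ij.1 ij.2)).
Unshelve. all: by end_near. Qed.

Lemma cvg_bigsum (I : Type) (s : seq I) (u : I -> nat -> R) (a : I -> R) :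
  (forall i, u i @ \oo --> a i) ->
  (fun N => \sum_(i <- s) u i N) @ \oo --> \sum_(i <- s) a i.
Proof.
move=> H; elim: s => [|x s IH].
  rewrite big_nil; under eq_fun do rewrite big_nil; exact: cvg_cst.
rewrite big_cons; under eq_fun do rewrite big_cons.
exact: cvgD.
Qed.

Lemma cvg_AMB p m n q (A : 'M[R]_(p,m)) (B : 'M[R]_(n,q)) (u : nat -> 'M[R]_(m,n)) L i j :
  u @ \oo --> L -> (fun N => (A *m u N *m B) i j) @ \oo --> (A *m L *m B) i j.
Proof.
move=> H.
have E : forall M : 'M[R]_(m,n), (A *m M *m B) i j = \sum_(l < n) \sum_(k < m) A i k * M k l * B l j.
  by move=> M; rewrite mxE; apply: eq_bigr => l _; rewrite mxE mulr_suml.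
under eq_fun do rewrite E. rewrite E.
apply: cvg_bigsum => l; apply: cvg_bigsum => k.
apply: cvgMr_tmp; apply: cvgMl_tmp; exact: cvg_entry.
Qed.

End Lim.


Section Mexp.
Variables (R : realType) (n : nat) (J : 'M[R]_n).

Definition mJ : R := \sum_(i < n) \sum_(j < n) `|J i j|.
Definition aJ : R := n%:R * mJ.

Lemma mJ_ge0 : 0 <= mJ.
Proof. by apply: sumr_ge0 => i _; apply: sumr_ge0. Qed.
Lemma aJ_ge0 : 0 <= aJ.
Proof. by rewrite /aJ mulr_ge0 // mJ_ge0. Qed.

Lemma Jentry_le i j : `|J i j| <= mJ.
Proof.
rewrite /mJ (bigD1 i) //= (bigD1 j) //= -addrA lerDl addr_ge0 //.
  by apply: sumr_ge0.
by apply: sumr_ge0 => *; apply: sumr_ge0.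
Qed.

Lemma Jpow_le k i j : `|(J ^+ k) i j| <= aJ ^+ k.
Proof.
elim: k i j => [|k IH] i j.
  rewrite !expr0 [1]/(1%:M) mxE.
  by case: (i == j); rewrite ?normr1 ?normr0.
rewrite exprS -mulmxE mxE exprS.
apply: (le_trans (ler_norm_sum _ _ _)).
apply: (@le_trans _ _ (\sum_(l < n) mJ * aJ ^+ k)).
  apply: ler_sum => l _; rewrite normrM; apply: ler_pM => //; first exact: Jentry_le.
by rewrite sumr_const card_ord -mulr_natl {2}/aJ mulrA.
Qed.

Lemma cvg_pseries_bound (c : R^nat) (B C : R) : 0 <= C ->
  (forall k, `|c k| <= B * (C ^+ k / k`!%:R)) -> forall x, cvgn (pseries c x).
Proof.
move=> C0 Hc x.
have B0 : 0 <= B.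
  have := Hc 0%N; rewrite expr0 fact0 invr1 mulr1 mulr1 => H.
  exact: le_trans H.
apply: normed_cvg.
apply: (@series_le_cvg _ _ (B *: exp_coeff (C * `|x|))).
- by move=> k /=.
- move=> k /=; rewrite /GRing.scale /= mulr_ge0 //; apply: exp_coeff_ge0.
  by rewrite mulr_ge0.
- move=> k /=; rewrite /GRing.scale /= /exp_coeff /= normrM normrX.
  have -> : B *: ((C * `|x|) ^+ k / k`!%:R) = B * (C ^+ k / k`!%:R) * `|x| ^+ k.
    by rewrite /GRing.scale /= exprMn; ring.
  by rewrite ler_wpM2r ?exprn_ge0.
- exact/is_cvg_seriesZ/is_cvg_series_exp_coeff.
Qed.

Definition cfd i j (s : nat) (k : nat) : R := (k`!%:R)^-1 * (J ^+ (k + s)) i j.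

Lemma cfd_bound i j s k : `|cfd i j s k| <= aJ ^+ s * (aJ ^+ k / k`!%:R).
Proof.
rewrite /cfd normrM normfV [`|k`!%:R|]ger0_norm // mulrC mulrA -exprD addnC.
by rewrite ler_wpM2r ?invr_ge0 // Jpow_le.
Qed.

Lemma cfd_diffs i j s : pseries_diffs (cfd i j s) = cfd i j s.+1.
Proof.
apply/funext => k; rewrite /pseries_diffs /cfd factS natrM invfM !mulrA mulfV ?mul1r.
  by rewrite addSnnS.
by rewrite pnatr_eq0.
Qed.

Lemma cfd_cvg i j s x : cvgn (pseries (cfd i j s) x).
Proof. exact: (cvg_pseries_bound aJ_ge0 (cfd_bound i j s)). Qed.


Lemma exprZ_mx (t : R) k : (t *: J) ^+ k = t ^+ k *: J ^+ k.
Proof.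
elim: k => [|k IH]; first by rewrite !expr0 scale1r.
by rewrite !exprS IH -!mulmxE -scalemxAl -scalemxAr scalerA.
Qed.

Definition Sm (t : R) : nat -> 'M[R]_n :=
  series (fun k : nat => (k`!%:R)^-1 *: (t *: J) ^+ k).

Lemma Sm_AMB p q (A : 'M[R]_(p,n)) (B : 'M[R]_(n,q)) t N i j :
  (A *m Sm t N *m B) i j =
  \sum_(0 <= k < N) ((k`!%:R)^-1 * t ^+ k) * (A *m J ^+ k *m B) i j.
Proof.
rewrite /Sm /series /= mulmx_sumr mulmx_suml summxE; apply: eq_bigr => k _.
by rewrite exprZ_mx scalerA -scalemxAr -scalemxAl mxE.
Qed.

Lemma pseries_AMB i j s t :
  pseries (cfd i j s) t = fun N => (J ^+ s *m Sm t N *m 1%:M) i j.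
Proof.
apply/funext => N; rewrite Sm_AMB /pseries /series /=; apply: eq_bigr => k _.
rewrite /cfd mulmx1 mulmxE -exprD addnC; ring.
Qed.

Lemma pseries_AMB' i j s t :
  pseries (cfd i j s) t = fun N => (1%:M *m Sm t N *m J ^+ s) i j.
Proof.
apply/funext => N; rewrite Sm_AMB /pseries /series /=; apply: eq_bigr => k _.
rewrite /cfd mul1mx mulmxE -exprD; ring.
Qed.

Lemma Sm_cvg t : Sm t @ \oo --> \matrix_(i,j) limn (pseries (cfd i j 0) t).
Proof.
apply: cvg_entries => i j; rewrite mxE.
have -> : (fun N => Sm t N i j) = pseries (cfd i j 0) t.
  rewrite pseries_AMB; apply/funext => N; by rewrite mulmx1 expr0 mul1mx.
exact: cfd_cvg.
Qed.

Lemma mexp_cvg t : Sm t @ \oo --> mexp (t *: J).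
Proof.
have -> : mexp (t *: J) = \matrix_(i,j) limn (pseries (cfd i j 0) t).
  by rewrite /mexp; apply: cvg_lim => //; exact: Sm_cvg.
exact: Sm_cvg.
Qed.

Lemma mexp_entries t : mexp (t *: J) = \matrix_(i,j) limn (pseries (cfd i j 0) t).
Proof. by apply: cvg_lim => //; [exact: Sm_cvg]. Qed.

Lemma lim_cfd1 i j t : limn (pseries (cfd i j 1) t) = (J *m mexp (t *: J)) i j.
Proof.
apply: cvg_lim => //; rewrite pseries_AMB expr1.
rewrite -[J *m mexp (t *: J)]mulmx1.
apply: cvg_AMB; exact: mexp_cvg.
Qed.

Lemma lim_cfd1' i j t : limn (pseries (cfd i j 1) t) = (mexp (t *: J) *m J) i j.
Proof.
apply: cvg_lim => //; rewrite pseries_AMB' expr1.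
rewrite -[mexp (t *: J) *m J]mul1mx mulmxA.
apply: cvg_AMB; exact: mexp_cvg.
Qed.

Lemma mexp_comm t : J *m mexp (t *: J) = mexp (t *: J) *m J.
Proof. by apply/matrixP => i j; rewrite -lim_cfd1 -lim_cfd1'. Qed.

Lemma is_derive_mexp (t : R) :
  is_derive t 1 (fun x => mexp (x *: J)) (J *m mexp (t *: J)).
Proof.
have Hd : forall i j, is_derive t 1 (fun x => limn (pseries (cfd i j 0) x))
                                   (limn (pseries (cfd i j 1) t)).
  move=> i j; rewrite -cfd_diffs; apply: (@pseries_snd_diffs _ _ (`|t| + 1)).
  - exact: cfd_cvg.
  - rewrite cfd_diffs; exact: cfd_cvg.
  - rewrite !cfd_diffs; exact: cfd_cvg.
  - by rewrite [ltRHS]ger0_norm ?ltrDl // addr_ge0.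
have -> : (fun x => mexp (x *: J)) = (fun x => \matrix_(i,j) limn (pseries (cfd i j 0) x)).
  by apply/funext => x; rewrite mexp_entries.
have Hd' : forall i j, is_derive t 1 (fun x => (\matrix_(i,j) limn (pseries (cfd i j 0) x)) i j)
                                   (limn (pseries (cfd i j 1) t)).
  move=> i j; have -> // : (fun x => (\matrix_(i,j) limn (pseries (cfd i j 0) x)) i j) =
      (fun x => limn (pseries (cfd i j 0) x)).
  by apply/funext => x; rewrite mxE.
have der : derivable (fun x => \matrix_(i,j) limn (pseries (cfd i j 0) x)) t 1.
  by apply/derivable_mxP => i j; case: (Hd' i j).
apply: DeriveDef => //; rewrite derive_mx //; apply/matrixP => i j.
by rewrite -lim_cfd1 mxE; case: (Hd' i j).
Qed.

Lemma mexp_zero p q (A : 'M[R]_(p,n)) (B : 'M[R]_(n,q)) (t : R) i j :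
  (forall k, (A *m J ^+ k *m B) i j = 0) -> (A *m mexp (t *: J) *m B) i j = 0.
Proof.
move=> H; have := cvg_AMB (A:=A) (B:=B) (i:=i) (j:=j) (mexp_cvg (t:=t)).
have -> : (fun N => (A *m Sm t N *m B) i j) = cst 0.
  apply/funext => N; rewrite Sm_AMB /= big1 // => k _; by rewrite H mulr0.
move/(cvg_lim (@Rhausdorff R)) => <-; by rewrite lim_cst.
Qed.

End Mexp.

Section Alg.
Variables (R : realType) (n : nat) (G : 'M[R]_n) (br : 'rV[R]_n -> 'rV[R]_n -> 'rV[R]_n)
  (Jm : 'rV[R]_n -> 'M[R]_n).
Hypotheses (hG : inner_product G) (hbr : two_step_nilpotent br)
  (hZ : center_nondeg G br) (hJ : is_J G br Jm).
Local Notation V := 'rV[R]_n.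
Local Notation C := (ncenter br).
Local Notation Vp := (vpart G br).

Lemma brL a (x y w : V) : br (a *: x + y) w = a *: br x w + br y w.
Proof. by case: hbr. Qed.
Lemma brS (x y : V) : br x y = - br y x.
Proof. by case: hbr. Qed.
Lemma brR a (x y w : V) : br w (a *: x + y) = a *: br w x + br w y.
Proof. by rewrite brS brL (brS w x) (brS w y) scalerN opprD. Qed.
Lemma brDl (x x' y : V) : br (x + x') y = br x y + br x' y. Proof. exact: (blD (@brL)). Qed.
Lemma brDr (x y y' : V) : br x (y + y') = br x y + br x y'. Proof. exact: (brD (fun a x y y' => @brR a y y' x)). Qed.
Lemma brZl a (x y : V) : br (a *: x) y = a *: br x y. Proof. exact: (blZ (@brL)). Qed.
Lemma brZr a (x y : V) : br x (a *: y) = a *: br x y. Proof. exact: (brZ (fun a x y y' => @brR a y y' x)). Qed.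
Lemma br0l (y : V) : br 0 y = 0. Proof. exact: (bl0 (@brL)). Qed.
Lemma br0r (x : V) : br x 0 = 0. Proof. exact: (br0 (fun a x y y' => @brR a y y' x)). Qed.
Lemma brNl (x y : V) : br (- x) y = - br x y.
Proof. by rewrite -scaleN1r brZl scaleN1r. Qed.
Lemma brNr (x y : V) : br x (- y) = - br x y.
Proof. by rewrite -scaleN1r brZr scaleN1r. Qed.
Lemma brBl (x x' y : V) : br (x - x') y = br x y - br x' y.
Proof. by rewrite brDl brNl. Qed.
Lemma brBr (x y y' : V) : br x (y - y') = br x y - br x y'.
Proof. by rewrite brDr brNr. Qed.
Lemma brxx (x : V) : br x x = 0.
Proof.
have := brS x x; move/(congr1 (fun u => u + br x x)); rewrite addNr => H.
have : 2%:R *: br x x = 0 by rewrite scaler_nat mulr2n.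
by move/eqP; rewrite scaler_eq0 pnatr_eq0 /= => /eqP.
Qed.

Lemma ipL a (x y z : V) : ip G (a *: x + y) z = a * ip G x z + ip G y z.
Proof. by rewrite /ip !mulmxDl -!scalemxAl !mxE. Qed.
Lemma ipC (x y : V) : ip G x y = ip G y x.
Proof.
case: hG => GT _.
have T : forall A : 'M[R]_1, A 0 0 = A^T 0 0 by move=> A; rewrite mxE.
by rewrite /ip T !trmx_mul trmxK GT mulmxA.
Qed.
Lemma ipR a (x y z : V) : ip G z (a *: x + y) = a * ip G z x + ip G z y.
Proof. by rewrite ipC ipL !(ipC z). Qed.
Lemma ipDl (x y z : V) : ip G (x + y) z = ip G x z + ip G y z.
Proof. by have := ipL 1 x y z; rewrite scale1r mul1r. Qed.
Lemma ipDr (x y z : V) : ip G z (x + y) = ip G z x + ip G z y.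
Proof. by have := ipR 1 x y z; rewrite scale1r mul1r. Qed.
Lemma ipZl a (x z : V) : ip G (a *: x) z = a * ip G x z.
Proof. by rewrite /ip -!scalemxAl !mxE. Qed.
Lemma ipZr a (x z : V) : ip G z (a *: x) = a * ip G z x.
Proof. by rewrite ipC ipZl ipC. Qed.
Lemma ip0l (z : V) : ip G 0 z = 0.
Proof. by rewrite /ip !mul0mx mxE. Qed.
Lemma ip0r (z : V) : ip G z 0 = 0.
Proof. by rewrite ipC ip0l. Qed.
Lemma ipNl (x z : V) : ip G (- x) z = - ip G x z.
Proof. by rewrite -scaleN1r ipZl mulN1r. Qed.
Lemma ipNr (x z : V) : ip G z (- x) = - ip G z x.
Proof. by rewrite -scaleN1r ipZr mulN1r. Qed.
Lemma ipBl (x y z : V) : ip G (x - y) z = ip G x z - ip G y z.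
Proof. by rewrite ipDl ipNl. Qed.
Lemma ipBr (x y z : V) : ip G z (x - y) = ip G z x - ip G z y.
Proof. by rewrite ipDr ipNr. Qed.

Lemma ip_nondeg (x : V) : (forall z, ip G x z = 0) -> x = 0.
Proof.
move=> H.
have xG : x *m G = 0.
  apply/rowP => j; have := H (delta_mx 0 j).
  by rewrite /ip trmx_delta -colE !mxE.
case: hG => _ GU.
by rewrite -(mulmxK GU x) xG mul0mx.
Qed.

Lemma C0 : C 0. Proof. by move=> x; rewrite br0l. Qed.
Lemma CD x y : C x -> C y -> C (x + y).
Proof. by move=> hx hy w; rewrite brDl hx hy addr0. Qed.
Lemma CZ a x : C x -> C (a *: x).
Proof. by move=> hx w; rewrite brZl hx scaler0. Qed.
Lemma CN x : C x -> C (- x).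
Proof. by move=> hx w; rewrite brNl hx oppr0. Qed.
Lemma CB x y : C x -> C y -> C (x - y).
Proof. by move=> hx hy; apply: CD => //; apply: CN. Qed.
Lemma Cbr x y : C (br x y).
Proof. by case: hbr => _ _ H _ w; apply: H. Qed.
Lemma Cr x z : C z -> br x z = 0.
Proof. by move=> hz; rewrite brS hz oppr0. Qed.

Lemma V0 : Vp 0. Proof. by move=> z _; rewrite ip0r. Qed.
Lemma VD x y : Vp x -> Vp y -> Vp (x + y).
Proof. by move=> hx hy z hz; rewrite ipDr hx // hy // addr0. Qed.
Lemma VZ a x : Vp x -> Vp (a *: x).
Proof. by move=> hx z hz; rewrite ipZr hx // mulr0. Qed.
Lemma VN x : Vp x -> Vp (- x).
Proof. by move=> hx z hz; rewrite ipNr hx // oppr0. Qed.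
Lemma VB x y : Vp x -> Vp y -> Vp (x - y).
Proof. by move=> hx hy; apply: VD => //; apply: VN. Qed.
Lemma VJ x a : Vp x -> C a -> Vp (x *m Jm a).
Proof. by move=> hx ha; case: (hJ ha hx). Qed.
Lemma ipVC x z : Vp x -> C z -> ip G x z = 0.
Proof. by move=> hx hz; rewrite ipC hx. Qed.

Lemma CV0 x : C x -> Vp x -> x = 0.
Proof. by move=> hc hv; apply: hZ => // w hw; rewrite ipC hv. Qed.


Lemma br_suml I (s : seq I) (F : I -> V) y : br (\sum_(i <- s) F i) y = \sum_(i <- s) br (F i) y.
Proof. exact: (bl_sum (@brL)). Qed.
Lemma br_sumr I (s : seq I) x (F : I -> V) : br x (\sum_(i <- s) F i) = \sum_(i <- s) br x (F i).
Proof. exact: (br_sum (fun a x y y' => @brR a y y' x)). Qed.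

Definition Bk (k : 'I_n) : 'M[R]_n := \matrix_(i, j) (br (delta_mx 0 i) (delta_mx 0 k)) 0 j.

Lemma Bk_mul z k : z *m Bk k = br z (delta_mx 0 k).
Proof.
apply/rowP => j; rewrite mxE {2}(row_sum_delta z) br_suml summxE.
by apply: eq_bigr => i _; rewrite brZl !mxE.
Qed.

Definition Cs := (\bigcap_(k < n) kermx (Bk k))%MS.

Lemma C_sub z : C z <-> (z <= Cs)%MS.
Proof.
split.
  by move=> hz; apply/sub_bigcapmxP => k _; rewrite sub_kermx Bk_mul hz.
move/sub_bigcapmxP => H x; rewrite (row_sum_delta x) br_sumr big1 // => k _.
rewrite brZr -Bk_mul; move: (H k isT); rewrite sub_kermx => /eqP ->.
by rewrite scaler0.
Qed.

Definition Kb := row_base Cs.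

Lemma C_Kb z : C z <-> (z <= Kb)%MS.
Proof. by rewrite /Kb eq_row_base; exact: C_sub. Qed.

Definition Mg := Kb *m G *m Kb^T.

Lemma Mg_unit : Mg \in unitmx.
Proof.
rewrite -row_free_unit -kermx_eq0; apply/eqP/row_matrixP => i; rewrite row0.
set u := row i (kermx Mg).
have uM : u *m Mg = 0 by rewrite /u -row_mul mulmx_ker row0.
have : u *m Kb = 0.
  apply: hZ; first by apply/C_Kb; exact: submxMl.
  move=> w /C_Kb /submxP [d ->]; rewrite /ip trmx_mul.
  have -> : u *m Kb *m G *m (Kb^T *m d^T) = u *m Mg *m d^T by rewrite /Mg !mulmxA.
  by rewrite uM mul0mx mxE.
by move/eqP; rewrite mulmx_free_eq0 ?row_base_free // => /eqP.
Qed.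

Lemma decomp (Z : V) : exists Zc, C Zc /\ Vp (Z - Zc).
Proof.
exists (Z *m G *m Kb^T *m invmx Mg *m Kb); split.
  by apply/C_Kb; exact: submxMl.
move=> c /C_Kb /submxP [d ->]; rewrite ipC /ip [(d *m Kb)^T]trmx_mul.
have H0 : (Z - Z *m G *m Kb^T *m invmx Mg *m Kb) *m G *m Kb^T = 0.
  rewrite !mulmxBl.
  have -> : Z *m G *m Kb^T *m invmx Mg *m Kb *m G *m Kb^T
          = Z *m G *m Kb^T *m invmx Mg *m Mg by rewrite /Mg !mulmxA.
  by rewrite mulmxKV ?Mg_unit // subrr.
by rewrite mulmxA H0 mul0mx mxE.
Qed.

Lemma Vuniq (u : V) : Vp u -> (forall y, Vp y -> ip G u y = 0) -> u = 0.
Proof.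
move=> hu H; apply: ip_nondeg => Z; have [Zc [hc hv]] := decomp Z.
have -> : Z = Zc + (Z - Zc) by rewrite addrC subrK.
by rewrite ipDr ipVC // H // addr0.
Qed.

Lemma JmP p a : Vp p -> C a -> forall y, Vp y -> ip G (p *m Jm a) y = ip G a (br p y).
Proof. by move=> hp ha; case: (hJ ha hp). Qed.

Lemma JmL s a b p : C a -> C b -> Vp p ->
  p *m Jm (s *: a + b) = s *: (p *m Jm a) + p *m Jm b.
Proof.
move=> ha hb hp; apply/eqP; rewrite -subr_eq0; apply/eqP.
have hab : C (s *: a + b) by apply: CD => //; apply: CZ.
apply: Vuniq.
  by apply: VB; [apply: VJ | apply: VD; [apply: VZ|]; apply: VJ].
move=> y hy; rewrite ipBl ipDl ipZl !JmP // ipL; ring.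
Qed.

Lemma JmD a b p : C a -> C b -> Vp p -> p *m Jm (a + b) = p *m Jm a + p *m Jm b.
Proof. by move=> *; have := JmL 1 (a:=a) (b:=b) (p:=p); rewrite !scale1r; apply. Qed.
Lemma Jm0 p : Vp p -> p *m Jm 0 = 0.
Proof.
move=> hp; apply: Vuniq; first by apply: VJ => //; exact: C0.
move=> y hy; rewrite JmP //; [exact: ip0l | exact: C0].
Qed.
Lemma JmZ s a p : C a -> Vp p -> p *m Jm (s *: a) = s *: (p *m Jm a).
Proof. by move=> ha hp; have := JmL s ha C0 hp; rewrite !addr0 Jm0 // addr0. Qed.
Lemma JmN a p : C a -> Vp p -> p *m Jm (- a) = - (p *m Jm a).
Proof. by move=> ha hp; rewrite -scaleN1r JmZ // scaleN1r. Qed.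
Lemma JmB a b p : C a -> C b -> Vp p -> p *m Jm (a - b) = p *m Jm a - p *m Jm b.
Proof. by move=> ha hb hp; rewrite JmD ?JmN //; apply: CN. Qed.


Lemma koszulL X Y a Z Z' :
  koszul G br X Y (a *: Z + Z') = a * koszul G br X Y Z + koszul G br X Y Z'.
Proof. rewrite /koszul brR brL !(ipL, ipR); ring. Qed.

Lemma koszul0 X Y : koszul G br X Y 0 = 0.
Proof. by rewrite /koszul br0r br0l !(ip0l, ip0r) subrr addr0 mulr0. Qed.

Lemma koszulD X Y Z Z' : koszul G br X Y (Z + Z') = koszul G br X Y Z + koszul G br X Y Z'.
Proof. by have := koszulL X Y 1 Z Z'; rewrite scale1r mul1r. Qed.

Lemma koszul_lin X Y (Z : V) : koszul G br X Y Z = \sum_(j < n) Z 0 j * koszul G br X Y (delta_mx 0 j).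
Proof.
rewrite {1}(row_sum_delta Z).
rewrite (big_morph (koszul G br X Y) (@koszulD X Y) (koszul0 X Y)).
apply: eq_bigr => j _; have := koszulL X Y (Z 0 j) (delta_mx 0 j) 0.
by rewrite addr0 koszul0 addr0.
Qed.

Lemma ip_nabla X Y Z : ip G (nabla G br X Y) Z = koszul G br X Y Z.
Proof.
case: hG => _ GU.
rewrite /nabla /ip mulmxKV // mxE koszul_lin; apply: eq_bigr => j _.
by rewrite !mxE mulrC.
Qed.

Lemma nabla_eq X Y W : (forall Z, ip G W Z = koszul G br X Y Z) -> nabla G br X Y = W.
Proof.
move=> H; apply/eqP; rewrite -subr_eq0; apply/eqP; apply: ip_nondeg => Z.
by rewrite ipBl ip_nabla H subrr.
Qed.

Lemma nabla_dec X Y a p b q : C a -> C b -> Vp p -> Vp q -> X = a + p -> Y = b + q ->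
  nabla G br X Y = 2^-1 *: br p q - 2^-1 *: (q *m Jm a) - 2^-1 *: (p *m Jm b).
Proof.
move=> ha hb hp hq -> ->; apply: nabla_eq => Z.
have [Zc [hc hv]] := decomp Z.
set Zv := Z - Zc.
have -> : Z = Zc + Zv by rewrite /Zv addrC subrK.
have hv' : Vp Zv := hv.
clearbody Zv.
have E1 : br (a + p) (b + q) = br p q by rewrite brDl !brDr !ha (Cr _ hb) !add0r.
have E2 : br (b + q) (Zc + Zv) = br q Zv by rewrite brDl !brDr !hb (Cr _ hc) !add0r.
have E3 : br (Zc + Zv) (a + p) = br Zv p by rewrite brDl !brDr !hc (Cr _ ha) !add0r.
rewrite /koszul E1 E2 E3 !(ipDl, ipDr, ipBl, ipNl, ipZl).
rewrite (hv' _ (Cbr p q)) (ipVC (VJ hq ha) hc) (ipVC (VJ hp hb) hc).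
rewrite !JmP // (hp _ (Cbr q Zv)) (hq _ (Cbr Zv p)).
rewrite (ipC (br q Zv) a) (ipC (br Zv p) b) (brS Zv p) ipNr.
ring.
Qed.


Ltac cv := repeat (first [ assumption | apply: C0 | apply: V0 | apply: Cbr
  | apply: CD | apply: CN | apply: CZ | apply: VD | apply: VN | apply: VZ | apply: VJ ]).

Lemma residual_alg a b b' b'' p q r s :
  C a -> C b -> C b' -> C b'' -> Vp p -> Vp q -> Vp r -> Vp s ->
  (b'' + (s + (r *m Jm a + r *m Jm a) + q *m Jm a *m Jm a))
  + (nabla G br (p *m Jm a) (b + q) + nabla G br (a + p) (b' + (r + q *m Jm a)))
  + nabla G br (a + p) (b' + (r + q *m Jm a) + nabla G br (a + p) (b + q))
  + curv G br (b + q) (a + p) (a + p)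
  = (b'' - (br (r + q *m Jm a) p + br q (p *m Jm a)))
    + (s + r *m Jm a - p *m Jm (b' - br q p)).
Proof.
move=> ha hb hb' hb'' hp hq hr hs.
set J := Jm a.
have N1 : nabla G br (p *m J) (b + q) = 2^-1 *: br (p *m J) q - 2^-1 *: (q *m Jm 0) - 2^-1 *: (p *m J *m Jm b).
  by apply: nabla_dec => //; cv; rewrite add0r.
have N2 : nabla G br (a + p) (b' + (r + q *m J)) =
   2^-1 *: br p (r + q *m J) - 2^-1 *: ((r + q *m J) *m J) - 2^-1 *: (p *m Jm b').
  by apply: nabla_dec => //; cv.
have N3 : nabla G br (a + p) (b + q) = 2^-1 *: br p q - 2^-1 *: (q *m J) - 2^-1 *: (p *m Jm b).
  by apply: nabla_dec => //; cv.
have N4 : nabla G br (a + p) (b' + (r + q *m J) + nabla G br (a + p) (b + q)) =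
   2^-1 *: br p (r + q *m J - 2^-1 *: (q *m J) - 2^-1 *: (p *m Jm b))
   - 2^-1 *: ((r + q *m J - 2^-1 *: (q *m J) - 2^-1 *: (p *m Jm b)) *m J)
   - 2^-1 *: (p *m Jm (b' + 2^-1 *: br p q)).
  apply: (nabla_dec (a:=a) (p:=p) (b:= b' + 2^-1 *: br p q)) => //; cv.
  rewrite N3; apply/rowP => k; rewrite !mxE; lra.
have N5 : nabla G br (a + p) (a + p) = 2^-1 *: br p p - 2^-1 *: (p *m J) - 2^-1 *: (p *m J).
  by apply: nabla_dec => //; cv.
have N6 : nabla G br (b + q) (nabla G br (a + p) (a + p)) =
   2^-1 *: br q (- (2^-1 *: (p *m J)) - 2^-1 *: (p *m J))
   - 2^-1 *: ((- (2^-1 *: (p *m J)) - 2^-1 *: (p *m J)) *m Jm b)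
   - 2^-1 *: (q *m Jm (2^-1 *: br p p)).
  apply: (nabla_dec (a:=b) (p:=q) (b:= 2^-1 *: br p p)) => //; cv.
  rewrite N5; apply/rowP => k; rewrite !mxE; lra.
have N7 : nabla G br (b + q) (a + p) = 2^-1 *: br q p - 2^-1 *: (p *m Jm b) - 2^-1 *: (q *m J).
  by apply: nabla_dec => //; cv.
have N8 : nabla G br (a + p) (nabla G br (b + q) (a + p)) =
   2^-1 *: br p (- (2^-1 *: (p *m Jm b)) - 2^-1 *: (q *m J))
   - 2^-1 *: ((- (2^-1 *: (p *m Jm b)) - 2^-1 *: (q *m J)) *m J)
   - 2^-1 *: (p *m Jm (2^-1 *: br q p)).
  apply: (nabla_dec (a:=a) (p:=p) (b:= 2^-1 *: br q p)) => //; cv.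
  rewrite N7; apply/rowP => k; rewrite !mxE; lra.
have E9 : br (b + q) (a + p) = br q p by rewrite brDl !brDr !hb (Cr _ ha) !add0r.
have N9 : nabla G br (br q p) (a + p) = 2^-1 *: br 0 p - 2^-1 *: (p *m Jm (br q p)) - 2^-1 *: (0 *m J).
  by apply: nabla_dec => //; cv; rewrite addr0.
rewrite /curv N1 N2 N4 N6 N8 E9 N9.
rewrite (brS q p) (brS (p *m J) q) brxx br0l mul0mx Jm0 //.
rewrite !(brDl, brDr, brBr, brNr, brZr, brBl, brNl, brZl).
rewrite (brS r p) (brS (q *m J) p).
rewrite !(mulmxDl, mulmxBl, mulNmx, scaler0, oppr0, addr0, subr0).
rewrite -!scalemxAl.
rewrite !JmB ?JmD ?JmN ?JmZ //; try solve [cv].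
rewrite ?Jm0 //; rewrite ?JmN //; try solve [cv].
apply/rowP => k; rewrite !mxE; lra.
Qed.


Lemma koszulX a X X' Y Z :
  koszul G br (a *: X + X') Y Z = a * koszul G br X Y Z + koszul G br X' Y Z.
Proof. rewrite /koszul brL brR !(ipL, ipR); ring. Qed.
Lemma koszulY a X Y Y' Z :
  koszul G br X (a *: Y + Y') Z = a * koszul G br X Y Z + koszul G br X Y' Z.
Proof. rewrite /koszul brL brR !(ipL, ipR); ring. Qed.

Lemma nablaL a X X' Y : nabla G br (a *: X + X') Y = a *: nabla G br X Y + nabla G br X' Y.
Proof. by apply: nabla_eq => Z; rewrite ipL !ip_nabla koszulX. Qed.
Lemma nablaR a X Y Y' : nabla G br X (a *: Y + Y') = a *: nabla G br X Y + nabla G br X Y'.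
Proof. by apply: nabla_eq => Z; rewrite ipL !ip_nabla koszulY. Qed.

Lemma derive_uniq (W : normedModType R) (f g : R -> W) (t : R) d1 d2 :
  is_derive t 1 f d1 -> is_derive t 1 g d2 -> f = g -> d1 = d2.
Proof. by move=> [_ <-] [_ <-] ->. Qed.

Lemma C_deriv (f : R -> V) (t : R) df : (forall s, C (f s)) -> is_derive t 1 f df -> C df.
Proof.
move=> hf hd x.
have H := is_derive_bil (@brL) (fun a x y y' => @brR a y y' x) hd (is_derive_cst x t 1).
have := derive_uniq H (is_derive_cst 0 t 1).
rewrite br0r addr0; apply.
by apply/funext => s; rewrite hf.
Qed.

Lemma V_deriv (f : R -> V) (t : R) df : (forall s, Vp (f s)) -> is_derive t 1 f df -> Vp df.
Proof.
move=> hf hd c hc.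
pose B := G *m c^T.
have bl : forall a (x x' : V) (y : 'M[R]_(n,1)), (a *: x + x') *m y = a *: (x *m y) + x' *m y.
  by move=> *; rewrite mulmxDl scalemxAl.
have brr : forall a (x : V) (y y' : 'M[R]_(n,1)), x *m (a *: y + y') = a *: (x *m y) + x *m y'.
  by move=> *; rewrite mulmxDr scalemxAr.
have H := is_derive_coord 0 0 (is_derive_bil bl brr hd (is_derive_cst B t 1)).
have := derive_uniq H (is_derive_cst 0 t 1).
rewrite mulmx0 addr0 ipC /ip /= -mulmxA; apply.
apply/funext => s; rewrite /= mulmxA -/(ip G (f s) c) ipC hf //.
Qed.

End Alg.

Section Misc.
Variable R : realType.

Lemma mmL m p q (a : R) (x x' : 'M[R]_(m,p)) (y : 'M[R]_(p,q)) :
  (a *: x + x') *m y = a *: (x *m y) + x' *m y.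
Proof. by rewrite mulmxDl scalemxAl. Qed.
Lemma mmR m p q (a : R) (x : 'M[R]_(m,p)) (y y' : 'M[R]_(p,q)) :
  x *m (a *: y + y') = a *: (x *m y) + x *m y'.
Proof. by rewrite mulmxDr scalemxAr. Qed.

Lemma is_deriveD' m k (f g : R -> 'M[R]_(m,k)) (t : R) df dg :
  is_derive t 1 f df -> is_derive t 1 g dg -> is_derive t 1 (fun s => f s + g s) (df + dg).
Proof. by move=> hf hg; exact: is_deriveD. Qed.
Lemma is_deriveB' m k (f g : R -> 'M[R]_(m,k)) (t : R) df dg :
  is_derive t 1 f df -> is_derive t 1 g dg -> is_derive t 1 (fun s => f s - g s) (df - dg).
Proof. by move=> hf hg; exact: is_deriveB. Qed.

Lemma is_derive_K m k (c : 'M[R]_(m,k)) (t : R) : is_derive t 1 (fun _ : R => c) 0.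
Proof. exact: is_derive_cst. Qed.

Lemma deriv0_const_R (g : R -> R) : (forall t : R, is_derive t 1 g 0) ->
  forall a b, a < b -> g a = g b.
Proof.
move=> H a b ab.
have cont : {within `[a, b], continuous g}.
  by apply: derivable_within_continuous => x _; case: (H x).
have [c _] := MVT ab (fun x _ => H x) cont.
by rewrite mul0r => /eqP; rewrite subr_eq0 => /eqP.
Qed.

Lemma deriv0_const m k (f : R -> 'M[R]_(m,k)) : (forall t : R, is_derive t 1 f 0) ->
  forall t, f t = f 0.
Proof.
move=> H t; apply/matrixP => i j.
have Hg : forall s : R, is_derive s 1 (fun s => f s i j) 0.
  by move=> s; have := is_derive_coord i j (H s); rewrite mxE.
case: (ltgtP t 0) => [lt|gt|->] //.
  exact: (deriv0_const_R Hg lt).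
exact/esym/(deriv0_const_R Hg gt).
Qed.

End Misc.


End Helpers.
Import Helpers.
Unset Implicit Arguments. Set Strict Implicit. Set Printing Implicit Defensive.

Theorem mainTheorem2 (R : realType) (n : nat)
  (G : 'M[R]_n) (br : 'rV[R]_n -> 'rV[R]_n -> 'rV[R]_n)
  (Jm : 'rV[R]_n -> 'M[R]_n)
  (hG : inner_product G) (hbr : two_step_nilpotent br)
  (hZ : center_nondeg G br) (hJ : is_J G br Jm)
  (z0 x0 : 'rV[R]_n) (hz0 : ncenter br z0) (hx0 : vpart G br x0)
  (z v : R -> 'rV[R]_n) (hzs : smooth z) (hvs : smooth v)
  (hz : forall t, ncenter br (z t)) (hv : forall t, vpart G br (v t)) :
  let J := Jm z0 in
  let E := fun t : R => mexp (t *: J) in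
  let x' := fun t : R => x0 *m E t in
  let gdot := fun t : R => z0 + x' t in
  is_jacobi G br gdot (fun t => z t + v t *m E t) <->
  exists zeta : 'rV[R]_n, ncenter br zeta /\
    forall t : R,
      derive1 z t - br (v t *m E t) (x' t) = zeta /\
      (derive1n 2 v t) *m E t + (derive1 v t *m J) *m E t - x' t *m Jm zeta = 0.
Proof.
move=> J E x' gdot.
have hz1 : forall t : R, is_derive t 1 z (derive1 z t).
  by move=> t; have := hzs 0%N t; rewrite derive1n0 => /derivableP; rewrite -derive1E.
have hz2 : forall t : R, is_derive t 1 (derive1 z) (derive1 (derive1 z) t).
  by move=> t; have := hzs 1%N t; rewrite derive1n1 => /derivableP; rewrite -derive1E.
have hv1 : forall t : R, is_derive t 1 v (derive1 v t).
  by move=> t; have := hvs 0%N t; rewrite derive1n0 => /derivableP; rewrite -derive1E.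
have hv2 : forall t : R, is_derive t 1 (derive1 v) (derive1 (derive1 v) t).
  by move=> t; have := hvs 1%N t; rewrite derive1n1 => /derivableP; rewrite -derive1E.
have hE : forall t : R, is_derive t 1 E (E t *m J).
  by move=> t; rewrite /E -mexp_comm; exact: is_derive_mexp.
have hw : forall t : R, is_derive t 1 (fun s => v s *m E s)
    (derive1 v t *m E t + v t *m E t *m J).
  move=> t; apply: is_derive_eq; first exact: (is_derive_bil (@mmL _ _ _ _) (@mmR _ _ _ _) (hv1 t) (hE t)).
  by rewrite mulmxA.
have hx : forall t : R, is_derive t 1 x' (x' t *m J).
  move=> t; apply: is_derive_eq.
    exact: (is_derive_bil (@mmL _ _ _ _) (@mmR _ _ _ _) (is_derive_cst x0 t 1) (hE t)).
  by rewrite mul0mx add0r mulmxA.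
have hEV : forall (y : 'rV[R]_n) (t : R), vpart G br y -> vpart G br (y *m E t).
  move=> y t hy c hc; rewrite (ipC hG) /ip /E -mulmxA.
  apply: mexp_zero => k; rewrite mulmxA -/(ip G (y *m J ^+ k) c) (ipC hG).
  have : vpart G br (y *m J ^+ k).
    elim: k => [|k IH]; first by rewrite expr0 mulmx1.
    by rewrite exprSr -mulmxE mulmxA; apply: VJ.
  by move=> H; apply: H.
have hz1C : forall t : R, ncenter br (derive1 z t).
  by move=> t; apply: (C_deriv hbr _ (hz1 t)).
have hz2C : forall t : R, ncenter br (derive1 (derive1 z) t).
  by move=> t; apply: (C_deriv hbr hz1C (hz2 t)).
have hv1V : forall t : R, vpart G br (derive1 v t).
  by move=> t; apply: (V_deriv hG _ (hv1 t)).
have hv2V : forall t : R, vpart G br (derive1 (derive1 v) t).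
  by move=> t; apply: (V_deriv hG hv1V (hv2 t)).
have hx'V : forall t : R, vpart G br (x' t) by move=> t; apply: hEV.
set Y := fun t => z t + v t *m E t.
have hY : forall t : R, is_derive t 1 Y (derive1 z t + (derive1 v t *m E t + v t *m E t *m J)).
  by move=> t; exact: (is_deriveD' (hz1 t) (hw t)).
have hcov : covD G br gdot Y = fun s =>
    (derive1 z s + (derive1 v s *m E s + v s *m E s *m J)) + nabla G br (gdot s) (Y s).
  by apply/funext => s; rewrite /covD derive1E; case: (hY s) => _ ->.
have hg : forall t : R, is_derive t 1 gdot (x' t *m J).
  move=> t; have HH := is_deriveD' (is_derive_K z0 t) (hx t).
  rewrite add0r in HH; exact HH.
have hY1d : forall t : R, is_derive t 1 (fun s => derive1 z s + (derive1 v s *m E s + v s *m E s *m J))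
   (derive1 (derive1 z) t + (derive1 (derive1 v) t *m E t + (derive1 v t *m E t *m J
      + derive1 v t *m E t *m J) + v t *m E t *m J *m J)).
  move=> t; apply: is_derive_eq.
    apply: (is_deriveD' (hz2 t)); apply: is_deriveD'.
      exact: (is_derive_bil (@mmL _ _ _ _) (@mmR _ _ _ _) (hv2 t) (hE t)).
    exact: (is_derive_bil (@mmL _ _ _ _) (@mmR _ _ _ _) (hw t) (is_derive_cst J t 1)).
  by rewrite mulmx0 addr0 mulmxDl !mulmxA !addrA.
have hcd : forall t : R, is_derive t 1 (covD G br gdot Y)
   ((derive1 (derive1 z) t + (derive1 (derive1 v) t *m E t + (derive1 v t *m E t *m J
      + derive1 v t *m E t *m J) + v t *m E t *m J *m J))
    + (nabla G br (x' t *m J) (Y t) + nabla G br (gdot t)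
         (derive1 z t + (derive1 v t *m E t + v t *m E t *m J)))).
  move=> t; rewrite hcov; apply: (is_deriveD' (hY1d t)).
  exact: (is_derive_bil (@nablaL _ _ _ _ hG hbr) (@nablaR _ _ _ _ hG hbr) (hg t) (hY t)).
pose zd t := derive1 (derive1 z) t - (br (derive1 v t *m E t + v t *m E t *m J) (x' t)
                                     + br (v t *m E t) (x' t *m J)).
pose veq t := derive1 (derive1 v) t *m E t + derive1 v t *m E t *m J
              - x' t *m Jm (derive1 z t - br (v t *m E t) (x' t)).
have hRes : forall t : R, covD G br gdot (covD G br gdot Y) t + curv G br (Y t) (gdot t) (gdot t)
   = zd t + veq t.
  move=> t; rewrite {1}/covD derive1E; case: (hcd t) => _ ->; rewrite hcov.
  exact: (residual_alg hG hbr hZ hJ hz0 (hz t) (hz1C t) (hz2C t) (hx'V t) (hEV _ _ (hv t))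
           (hEV _ _ (hv1V t)) (hEV _ _ (hv2V t))).
pose zeta_f := fun s => derive1 z s - br (v s *m E s) (x' s).
have hzd_der : forall t : R, is_derive t 1 zeta_f (zd t).
  move=> t; have HH := is_deriveB' (hz2 t)
    (is_derive_bil (@brL _ _ _ hbr) (fun a x y y' => @brR _ _ _ hbr a y y' x) (hw t) (hx t)).
  exact HH.
have hzetaC : forall t : R, ncenter br (zeta_f t).
  by move=> t; apply: (CB hbr); [exact: hz1C | exact: (Cbr hbr)].
have hzdC : forall t : R, ncenter br (zd t).
  move=> t; apply: (CB hbr); first exact: hz2C.
  by apply: (CD hbr); exact: (Cbr hbr).
have hveqV : forall t : R, vpart G br (veq t).
  move=> t; apply: (VB hG); first apply: (VD hG).
  - exact: hEV.
  - by apply: (VJ hJ) => //; apply: hEV.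
  - by apply: (VJ hJ) => //; apply: hzetaC.
have hJE : forall t : R, derive1 v t *m J *m E t = derive1 v t *m E t *m J.
  by move=> t; rewrite -mulmxA /E mexp_comm mulmxA.
split.
  move=> HJ.
  have H0 : forall t : R, zd t = 0 /\ veq t = 0.
    move=> t; have := HJ t; rewrite hRes => /eqP; rewrite addr_eq0 => /eqP Hz.
    have Hz0 : zd t = 0.
      apply: (CV0 hG hZ); first exact: hzdC.
      by rewrite Hz; apply: (VN hG); exact: hveqV.
    by split => //; move: Hz; rewrite Hz0 => /esym /eqP; rewrite oppr_eq0 => /eqP.
  have hconst : forall t : R, zeta_f t = zeta_f 0.
    apply: deriv0_const => t; have := hzd_der t; by rewrite (proj1 (H0 t)).
  exists (zeta_f 0); split; first exact: hzetaC.
  move=> t; split; first exact: hconst.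
  have := proj2 (H0 t); rewrite /veq -/(zeta_f t) hconst => <-.
  by rewrite hJE.
move=> [zeta [hzeta H]] t.
rewrite hRes.
have hzf : zeta_f = fun _ => zeta by apply/funext => s; exact: (proj1 (H s)).
have -> : zd t = 0.
  by apply: (derive_uniq (hzd_der t) (is_derive_K zeta t)).
rewrite add0r /veq -/(zeta_f t) hzf -hJE.
exact: (proj2 (H t)).
Qed.
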